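(* Let $\underline{d}=(d_0,\dots,d_n)\in\mathbb{N}^{n+1}$ and let $M$ be the quiver module (for the equioriented type A quiver $0\to1\to\cdots\to n$ over $\mathbb{C}$) associated with the following lace diagram: in column $x$ place the dots $(x,y)$ for $0\le y<d_x$ (columns aligned at the bottom), and join every pair of dots $(x,y),(x+1,y)$ that are both present by a segment. Then $\mathrm{Ext}(M,M)=0$.
   Context: The quiver module associated with a lace diagram has at vertex $x$ the vector space with basis the dots of column $x$, and the map from vertex $x-1$ to vertex $x$ sends a dot to the dot it is joined to by a segment in column $x$, or to $0$ if there is no such segment. $\mathrm{Ext}=\mathrm{Ext}^1$ in the category of quiver modules. *)

(* Defs.v *)
From mathcomp Require Import all_boot all_algebra.
From mathcomp Require Import complex Rstruct.
Set Implicit Arguments. Unset Strict Implicit. Unset Printing Implicit Defensive.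
Import GRing.Theory.
Local Open Scope ring_scope.

Definition Cplx : fieldType := (Rdefinitions.R)[i].

(* Vectors are ROW vectors: the map of
   the arrow i -> i+1 is a matrix A_i : 'M_(dim i, dim (i+1)) acting by
   v |-> v *m A_i. *)
Definition src (n : nat) (i : 'I_n) : 'I_n.+1 := widen_ord (leqnSn n) i.
Definition tgt (n : nat) (i : 'I_n) : 'I_n.+1 := lift ord0 i.

Record qrep (F : fieldType) (n : nat) := QRep {
  qdim : 'I_n.+1 -> nat;
  qmap : forall i : 'I_n, 'M[F]_(qdim (src i), qdim (tgt i))
}.

Definition qfam (F : fieldType) (n : nat) (M N : qrep F n) :=
  forall x : 'I_n.+1, 'M[F]_(qdim M x, qdim N x).

Definition is_qmorph (F : fieldType) (n : nat) (M N : qrep F n)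
  (f : qfam M N) : Prop :=
  forall i : 'I_n, f (src i) *m qmap N i = qmap M i *m f (tgt i).

Definition is_ses (F : fieldType) (n : nat) (M E N : qrep F n)
  (j : qfam M E) (p : qfam E N) : Prop :=
  [/\ is_qmorph j, is_qmorph p &
      forall x : 'I_n.+1,
        [/\ row_free (j x), row_full (p x) & (j x == kermx (p x))%MS]].

Definition ses_splits (F : fieldType) (n : nat) (E N : qrep F n)
  (p : qfam E N) : Prop :=
  exists s : qfam N E, is_qmorph s /\ forall x : 'I_n.+1, s x *m p x = 1%:M.

(* Ext^1(N, M) = 0 (Yoneda Ext^1 in the category of quiver modules):
   every extension 0 -> M -> E -> N -> 0 splits. *)
Definition ext1_zero (F : fieldType) (n : nat) (N M : qrep F n) : Prop :=
  forall (E : qrep F n) (j : qfam M E) (p : qfam E N),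
    is_ses j p -> ses_splits p.

(* Basis vector of dot (x,y) is the y-th unit row vector; the arrow
   x -> x+1 sends it to the dot (x+1,y) if present, else to 0. *)
Definition lace_module (F : fieldType) (n : nat) (d : 'I_n.+1 -> nat)
  : qrep F n :=
  @QRep F n d (fun i => \matrix_(a < d (src i), b < d (tgt i))
                          ((nat_of_ord a == nat_of_ord b)%:R : F)).

(* Main.v *)
Require Import Defs.
From mathcomp Require Import all_boot all_algebra.
From mathcomp Require Import complex Rstruct.
Set Implicit Arguments. Unset Strict Implicit. Unset Printing Implicit Defensive.
Import GRing.Theory.
Local Open Scope ring_scope.

Definition Idm (F : fieldType) m m' : 'M[F]_(m, m') :=
  \matrix_(a < m, b < m') ((a : nat) == (b : nat))%:R.
Definition unitv (F : fieldType) (y m : nat) : 'rV[F]_m :=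
  \row_(b < m) ((y == (b : nat))%:R).

Lemma sum_delta (F : fieldType) m (a : nat) (h : (a < m)%N) (f : 'I_m -> F) :
  \sum_(b < m) (a == (b : nat))%:R * f b = f (Ordinal h).
Proof.
rewrite (bigD1 (Ordinal h)) //= eqxx mul1r big1 ?addr0 // => b hb.
rewrite (_ : (a == b) = false) ?mul0r //; apply/negbTE.
apply: contra hb => /eqP e; apply/eqP/val_inj => /=; by rewrite e.
Qed.

Lemma sum_delta_out (F : fieldType) m (a : nat) (h : (m <= a)%N) (f : 'I_m -> F) :
  \sum_(b < m) (a == (b : nat))%:R * f b = 0.
Proof.
apply: big1 => b _; rewrite (_ : (a == b) = false) ?mul0r //; apply/negbTE.
by rewrite neq_ltn (leq_trans (ltn_ord b) h) orbT.
Qed.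

Lemma Id_comp (F : fieldType) m1 m2 m3 : (m1 <= m2)%N ->
  Idm F m1 m2 *m Idm F m2 m3 = Idm F m1 m3.
Proof.
move=> h; apply/matrixP => a c; rewrite !mxE.
under eq_bigr do rewrite !mxE.
by rewrite (sum_delta (leq_trans (ltn_ord a) h) (fun b => ((b : nat) == c)%:R)).
Qed.

Lemma Id_1 (F : fieldType) m : Idm F m m = 1%:M.
Proof. by apply/matrixP => a c; rewrite !mxE. Qed.

Lemma unit_Id (F : fieldType) y m1 m2 : (y < m1)%N ->
  unitv F y m1 *m Idm F m1 m2 = unitv F y m2.
Proof.
move=> h; apply/rowP => c; rewrite !mxE.
under eq_bigr do rewrite !mxE.
by rewrite (sum_delta h (fun b => ((b : nat) == c)%:R)).
Qed.

Lemma unit_out (F : fieldType) y m : (m <= y)%N -> unitv F y m = 0.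
Proof.
move=> h; apply/rowP => c; rewrite !mxE.
by rewrite (_ : (y == c) = false) //; apply/negbTE; rewrite neq_ltn (leq_trans (ltn_ord c) h) orbT.
Qed.

Lemma row1_unit (F : fieldType) m (y : 'I_m) : row y (1%:M : 'M[F]_m) = unitv F y m.
Proof. by apply/rowP => c; rewrite !mxE. Qed.

Lemma rowId (F : fieldType) m m' k (y : 'I_m) (y' : 'I_m') (B : 'M[F]_(m', k)) :
  (y : nat) = y' -> row y (Idm F m m' *m B) = row y' B.
Proof.
move=> e; apply/rowP => c; rewrite !mxE.
under eq_bigr do rewrite !mxE.
have h : ((y : nat) < m')%N by rewrite e.
rewrite (sum_delta h (fun b => B b c)); congr (B _ c); exact: val_inj.
Qed.

Lemma rowId_out (F : fieldType) m m' k (y : 'I_m) (B : 'M[F]_(m', k)) :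
  (m' <= y)%N -> row y (Idm F m m' *m B) = 0.
Proof.
move=> h; apply/rowP => c; rewrite !mxE.
under eq_bigr do rewrite !mxE.
by rewrite (sum_delta_out h (fun b => B b c)).
Qed.

Record NQ (F : fieldType) := NQb {
  nd : nat -> nat; ne : nat -> nat;
  nA : forall t, 'M[F]_(ne t, ne t.+1);
  nj : forall t, 'M[F]_(nd t, ne t);
  np : forall t, 'M[F]_(ne t, nd t) }.

Definition NH (F : fieldType) (Q : NQ F) (n : nat) :=
  [/\ (forall t, (t < n)%N -> nj Q t *m nA Q t = Idm F _ _ *m nj Q t.+1),
      (forall t, (t < n)%N -> np Q t *m Idm F _ _ = nA Q t *m np Q t.+1) &
      (forall t, (t <= n)%N -> row_full (np Q t) /\ (kermx (np Q t) <= nj Q t)%MS)].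

Fixpoint good (F : fieldType) (Q : NQ F) (y k : nat) : forall t, 'rV[F]_(ne Q t) -> bool :=
  match k with
  | 0 => fun _ _ => true
  | k'.+1 => fun t w => if (y < nd Q t.+1)%N then @good F Q y k' t.+1 (w *m nA Q t)
                        else w *m nA Q t == 0
  end.

Lemma claim (F : fieldType) (Q : NQ F) n (H : NH Q n) k : forall t, (t + k <= n)%N ->
  forall y, (y < nd Q t)%N -> forall w0 : 'rV_(ne Q t), w0 *m np Q t = unitv F y (nd Q t) ->
  exists u : 'rV_y, @good F Q y k t (w0 + u *m Idm F y (nd Q t) *m nj Q t).
Proof.
case: H => Hj Hp Hf.
elim: k => [|k IH] t htk y hy w0 hw0; first by exists 0.
have tn : (t < n)%N by rewrite -addn1 (leq_trans _ htk) // leq_add2l.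
have comp : forall u : 'rV_y, (w0 + u *m Idm F y (nd Q t) *m nj Q t) *m nA Q t =
         w0 *m nA Q t + u *m Idm F y (nd Q t.+1) *m nj Q t.+1.
  move=> u; rewrite mulmxDl -!mulmxA Hj // !mulmxA.
  rewrite -(mulmxA u) Id_comp //; exact: ltnW.
have hz : w0 *m nA Q t *m np Q t.+1 = unitv F y (nd Q t) *m Idm F _ (nd Q t.+1).
  by rewrite -mulmxA -Hp // mulmxA hw0.
rewrite unit_Id // in hz.
case hy1: (y < nd Q t.+1)%N.
  have htk1 : (t.+1 + k <= n)%N by rewrite addSnnS.
  have [u Hu] := IH t.+1 htk1 y hy1 _ hz.
  exists u.
  change (if (y < nd Q t.+1)%N then @good F Q y k t.+1 ((w0 + u *m Idm F y (nd Q t) *m nj Q t) *m nA Q t) else (w0 + u *m Idm F y (nd Q t) *m nj Q t) *m nA Q t == 0).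
  rewrite hy1. rewrite comp. exact Hu.
rewrite unit_out in hz; last by rewrite leqNgt hy1.
have [_ Hk] := Hf t.+1 tn.
have /submxP [v hv] : (w0 *m nA Q t <= nj Q t.+1)%MS.
  by apply: submx_trans Hk; apply/sub_kermxP.
set u := (- (v *m Idm F (nd Q t.+1) y)).
exists u.
change (if (y < nd Q t.+1)%N then @good F Q y k t.+1 ((w0 + u *m Idm F y (nd Q t) *m nj Q t) *m nA Q t) else (w0 + u *m Idm F y (nd Q t) *m nj Q t) *m nA Q t == 0).
rewrite hy1 comp /u.
rewrite mulNmx -(mulmxA v) Id_comp; last by rewrite leqNgt hy1.
rewrite Id_1 mulmx1 hv.
by rewrite mulNmx addrN.
Qed.

Lemma rowDD (F : fieldType) m k (i : 'I_m) (A B : 'M[F]_(m, k)) : row i (A + B) = row i A + row i B.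
Proof. by apply/rowP => c; rewrite !mxE. Qed.

Definition NH2 (F : fieldType) (Q : NQ F) (n : nat) :=
  NH Q n /\ (forall t, (t <= n)%N -> nj Q t *m np Q t = 0).

Definition goodrow (F : fieldType) (Q : NQ F) n t y (w : 'rV_(ne Q t)) :=
  (w *m np Q t == unitv F y (nd Q t)) && @good F Q y (n - t) t w.

Lemma goodS (F : fieldType) (Q : NQ F) y k t w : @good F Q y k.+1 t w =
  if (y < nd Q t.+1)%N then @good F Q y k t.+1 (w *m nA Q t) else w *m nA Q t == 0.
Proof. by []. Qed.

Arguments goodrow {F} Q n t y w.

Lemma ex_good (F : fieldType) (Q : NQ F) n (H : NH2 Q n) t y :
  exists w : 'rV_(ne Q t), ((t <= n) && (y < nd Q t))%N ==> goodrow Q n t y w.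
Proof.
case: H => H Hjp.
case tn: (t <= n)%N; last by exists 0.
case hy: (y < nd Q t)%N; last by exists 0.
have H' := H; case: H' => _ _ Hf.
have [Hfull _] := Hf t tn.
have [B hB] := row_fullP Hfull.
set w0 := unitv F y (nd Q t) *m B.
have hw0 : w0 *m np Q t = unitv F y (nd Q t) by rewrite -mulmxA hB mulmx1.
have htk : (t + (n - t) <= n)%N by rewrite subnKC.
have [u Hu] := claim H htk hy hw0.
exists (w0 + u *m Idm F y (nd Q t) *m nj Q t).
rewrite /goodrow Hu andbT mulmxDl -mulmxA Hjp // mulmx0 addr0 hw0.
by rewrite eqxx.
Qed.

Definition wsel (F : fieldType) (Q : NQ F) n (H : NH2 Q n) t y : 'rV_(ne Q t) :=
  xchoose (ex_good H t y).

Definition Wfree (F : fieldType) (Q : NQ F) n (H : NH2 Q n) t : 'M_(nd Q t, ne Q t) :=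
  \matrix_(y < nd Q t, c < ne Q t)
    (if (0 < t)%N && (y < nd Q t.-1)%N then 0 else wsel H t y 0 c).

Fixpoint sfam (F : fieldType) (Q : NQ F) n (H : NH2 Q n) t : 'M_(nd Q t, ne Q t) :=
  match t with
  | 0 => Wfree H 0
  | t'.+1 => Idm F _ _ *m (sfam H t' *m nA Q t') + Wfree H t'.+1
  end.

Lemma rowW (F : fieldType) (Q : NQ F) n (H : NH2 Q n) t (y : 'I_(nd Q t)) :
  row y (Wfree H t) = if (0 < t)%N && (y < nd Q t.-1)%N then 0 else wsel H t y.
Proof. by apply/rowP => c; rewrite !mxE; case: ifP => _; rewrite ?mxE. Qed.

Lemma wselP (F : fieldType) (Q : NQ F) n (H : NH2 Q n) t (y : 'I_(nd Q t)) :
  (t <= n)%N -> goodrow Q n t y (wsel H t y).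
Proof.
move=> tn; have := xchooseP (ex_good H t y) => /implyP; apply.
by rewrite tn ltn_ord.
Qed.

Lemma sfam_inv (F : fieldType) (Q : NQ F) n (H : NH2 Q n) t : (t <= n)%N ->
  forall y : 'I_(nd Q t), goodrow Q n t y (row y (sfam H t)).
Proof.
have [[Hj Hp Hf] Hjp] := H.
elim: t => [|t IH] tn y.
  change (sfam H 0) with (Wfree H 0); rewrite rowW /=; exact: wselP.
have tn' : (t < n)%N by [].
change (sfam H t.+1) with (Idm F _ _ *m (sfam H t *m nA Q t) + Wfree H t.+1).
rewrite rowDD rowW /=.
case: (ltnP y (nd Q t)) => hy.
  rewrite (rowId _ (y' := Ordinal hy)) // addr0 row_mul.
  have /andP [/eqP h1 h2] := IH (ltnW tn') (Ordinal hy).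
  apply/andP; split.
    by rewrite -mulmxA -Hp // mulmxA h1 unit_Id.
  move: h2; rewrite -(subnSK tn').
  rewrite goodS (_ : (Ordinal hy < nd Q t.+1)%N = true) //; exact: (ltn_ord y).
rewrite (@rowId_out F (nd Q t.+1) (nd Q t) _ y) // add0r; exact: wselP.
Qed.

Lemma sfam_p (F : fieldType) (Q : NQ F) n (H : NH2 Q n) t : (t <= n)%N ->
  sfam H t *m np Q t = 1%:M.
Proof.
move=> tn; apply/row_matrixP => y; rewrite row_mul row1_unit.
by have /andP [/eqP -> _] := sfam_inv H tn y.
Qed.

Lemma sfam_comm (F : fieldType) (Q : NQ F) n (H : NH2 Q n) t : (t < n)%N ->
  sfam H t *m nA Q t = Idm F _ _ *m sfam H t.+1.
Proof.
move=> tn; apply/row_matrixP => r; rewrite row_mul.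
case: (ltnP r (nd Q t.+1)) => hr.
  rewrite (rowId _ (y' := Ordinal hr)) //.
  change (sfam H t.+1) with (Idm F _ _ *m (sfam H t *m nA Q t) + Wfree H t.+1).
  rewrite rowDD rowW /= ltn_ord addr0 (rowId _ (y' := r)) //.
  by rewrite row_mul.
rewrite rowId_out //.
have /andP [_ h2] := sfam_inv H (ltnW tn) r.
move: h2; rewrite -(subnSK tn).
rewrite goodS (_ : (r < nd Q t.+1)%N = false); first by move/eqP.
by rewrite ltnNge hr.
Qed.

Lemma srcE n t (h : (t < n)%N) : src (Ordinal h) = inord t :> 'I_n.+1.
Proof. by apply: val_inj; rewrite /= inordK //; exact: ltnW. Qed.

Lemma tgtE n t (h : (t < n)%N) : tgt (Ordinal h) = inord t.+1 :> 'I_n.+1.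
Proof. apply: val_inj; rewrite [RHS]inordK //. Qed.

Definition nmap (F : fieldType) n (R : qrep F n) t :
    'M[F]_(qdim R (inord t), qdim R (inord t.+1)) :=
  match ltnP t n with
  | LtnNotGeq h => castmx (congr1 (qdim R) (srcE h), congr1 (qdim R) (tgtE h))
                     (qmap R (Ordinal h))
  | GeqNotLtn _ => 0
  end.

Lemma castfwd (F : fieldType) n (R S : qrep F n) (f : qfam R S)
  (a b c e : 'I_n.+1) (ea : a = b) (ec : c = e)
  (A : 'M[F]_(qdim S a, qdim S c)) (B : 'M[F]_(qdim R a, qdim R c)) :
  f a *m A = B *m f c ->
  f b *m castmx (congr1 (qdim S) ea, congr1 (qdim S) ec) A =
  castmx (congr1 (qdim R) ea, congr1 (qdim R) ec) B *m f e.
Proof. by case: b / ea; case: e / ec; rewrite !castmx_id. Qed.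

Lemma castback (F : fieldType) n (R S : qrep F n)
  (a b c e : 'I_n.+1) (ea : a = b) (ec : c = e) (eb : b = a) (ee : e = c)
  (A : 'M[F]_(qdim S a, qdim S c)) (B : 'M[F]_(qdim R a, qdim R c))
  (G1 : 'M[F]_(qdim R b, qdim S b)) (G2 : 'M[F]_(qdim R e, qdim S e)) :
  G1 *m castmx (congr1 (qdim S) ea, congr1 (qdim S) ec) A =
    castmx (congr1 (qdim R) ea, congr1 (qdim R) ec) B *m G2 ->
  castmx (congr1 (qdim R) eb, congr1 (qdim S) eb) G1 *m A =
    B *m castmx (congr1 (qdim R) ee, congr1 (qdim S) ee) G2.
Proof.
subst b e.
by rewrite (eq_irrelevance eb erefl) (eq_irrelevance ee erefl) !castmx_id.
Qed.

Lemma castone (F : fieldType) n (R S : qrep F n) (a b : 'I_n.+1) (eb : b = a)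
  (G : 'M[F]_(qdim R b, qdim S b)) (P0 : forall x, 'M[F]_(qdim S x, qdim R x)) :
  G *m P0 b = 1%:M ->
  castmx (congr1 (qdim R) eb, congr1 (qdim S) eb) G *m P0 a = 1%:M.
Proof. by case: a / eb; rewrite castmx_id. Qed.

Lemma qm_nat (F : fieldType) n (R S : qrep F n) (f : qfam R S) :
  is_qmorph f -> forall t, (t < n)%N ->
  f (inord t) *m nmap S t = nmap R t *m f (inord t.+1).
Proof.
move=> Hf t ht; rewrite /nmap; case: ltnP => [h|]; last by rewrite leqNgt ht.
exact: castfwd (Hf (Ordinal h)).
Qed.

Lemma nmap_lace (F : fieldType) n (d : 'I_n.+1 -> nat) t : (t < n)%N ->
  nmap (lace_module F d) t = Idm F _ _.
Proof.
move=> ht; rewrite /nmap; case: ltnP => [h|]; last by rewrite leqNgt ht.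
by apply/matrixP => a b; rewrite castmxE !mxE.
Qed.

Theorem corollary2p5 (n : nat) (d : 'I_n.+1 -> nat) :
  ext1_zero (lace_module Cplx d) (lace_module Cplx d).
Proof.
move=> E j p [Hj Hp Hx].
pose Q := @NQb Cplx (fun t => d (inord t)) (fun t => qdim E (inord t)) (nmap E)
  (fun t => j (inord t)) (fun t => p (inord t)).
have H : NH2 Q n.
  split; first split.
  - move=> t ht; have := qm_nat Hj ht; rewrite nmap_lace //.
  - move=> t ht; have := qm_nat Hp ht; rewrite nmap_lace //.
  - move=> t ht; have [_ Hfull /andP [_ Hk]] := Hx (inord t); by split.
  - move=> t ht; have [_ _ /andP [/sub_kermxP Hk _]] := Hx (inord t); exact: Hk.
exists (fun x => castmx (congr1 (qdim (lace_module Cplx d)) (inord_val x),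
                         congr1 (qdim E) (inord_val x)) (sfam H x)).
split.
  case=> i hi.
  have := sfam_comm H hi.
  rewrite -(@nmap_lace Cplx n d i hi).
  change (nA Q i) with (nmap E i).
  rewrite /nmap; case: ltnP => [h|]; last by rewrite leqNgt hi.
  rewrite (bool_irrelevance h hi) => Hc.
  apply: (@castback Cplx n (lace_module Cplx d) E _ _ _ _ (srcE hi) (tgtE hi) (inord_val (src (Ordinal hi))) (inord_val (tgt (Ordinal hi)))). exact Hc.
move=> x.
apply: (castone (inord_val x) (P0 := p)).
apply: (sfam_p H).
by rewrite -ltnS.
Qed.
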